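(* Let $\alpha>0$, $t_0>0$, $x_0,v_0\in\mathcal H$, and let $x:[t_0,+\infty)\to\mathcal H$ be a solution of the Cauchy problem $$\tfrac{\alpha}{t}\dot x(t)+\operatorname{proj}_{C(x(t))+\ddot x(t)}(0)=0\ (t>t_0),\qquad x(t_0)=x_0,\ \dot x(t_0)=v_0 .$$ For $i=1,\dots,m$ define $\mathcal W_i(t)=f_i(x(t))+\frac12\|\dot x(t)\|^2$. Then for all $i$ and almost all $t\in[t_0,+\infty)$, $$\tfrac{d}{dt}\mathcal W_i(t)\le-\tfrac{\alpha}{t}\|\dot x(t)\|^2 .$$ Hence each $\mathcal W_i$ is nonincreasing, and $\mathcal W_i^\infty=\lim_{t\to+\infty}\mathcal W_i(t)$ exists in $\mathbb R\cup\{-\infty\}$. If $f_i$ is bounded from below, then $\mathcal W_i^\infty\in\mathbb R$.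
   Context: $\mathcal H$ is a real Hilbert space. $f_1,\dots,f_m:\mathcal H\to\mathbb R$ are convex and continuously differentiable. $C(x)=\operatorname{co}\{\nabla f_i(x):i=1,\dots,m\}$. For a closed convex $K$, $\operatorname{proj}_K(y)=\arg\min_{w\in K}\|w-y\|^2$. A solution of the Cauchy problem is a function $x:[t_0,+\infty)\to\mathcal H$ such that: $x\in C^1([t_0,+\infty))$; $\dot x$ is absolutely continuous on $[t_0,T]$ for every $T\ge t_0$; there is a Bochner measurable $\ddot x$ with $\dot x(t)=\dot x(t_0)+\int_{t_0}^t\ddot x(s)\,ds$ for all $t$, and $\frac{d}{dt}\dot x=\ddot x$ a.e.; the equation holds for almost all $t\ge t_0$; and the initial conditions hold. *)

(* Defs.v *)
From HB Require Import structures.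
From mathcomp Require Import all_boot all_order all_algebra.
From mathcomp Require Import all_classical all_reals all_analysis.
Set Implicit Arguments. Unset Strict Implicit. Unset Printing Implicit Defensive.
Import Order.TTheory GRing.Theory Num.Theory.
Import numFieldNormedType.Exports.
Local Open Scope classical_set_scope.
Local Open Scope ring_scope.

(* A real Hilbert space is modelled as a complete normed R-module H together
   with a symmetric bilinear form [ip] whose associated quadratic form is the
   square of the norm of H. *)
Definition inner_product {R : realType} {H : normedModType R}
  (ip : H -> H -> R) : Prop :=
  (forall u v : H, ip u v = ip v u) /\
  (forall (a : R) (u v w : H), ip (a *: u + v) w = a * ip u w + ip v w) /\
  (forall u : H, ip u u = `|u| ^+ 2).

Definition convex_fun {R : realType} {H : normedModType R} (f : H -> R) : Prop :=
  forall (u v : H) (l : R), 0 <= l <= 1 ->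
    f (l *: u + (1 - l) *: v) <= l * f u + (1 - l) * f v.

Definition is_gradient {R : realType} {H : normedModType R}
  (ip : H -> H -> R) (f : H -> R) (g : H -> H) : Prop :=
  forall u : H, differentiable f u /\ (forall v : H, 'd f u v = ip (g u) v).

Definition conv_hull {R : realType} {H : normedModType R} {m : nat}
  (g : 'I_m -> H) : set H :=
  [set y | exists l : 'I_m -> R,
     (forall i, 0 <= l i) /\ \sum_(i < m) l i = 1 /\ y = \sum_(i < m) l i *: g i].

Definition set_translate {R : realType} {H : normedModType R}
  (K : set H) (a : H) : set H := [set c + a | c in K].

Definition proj_onto {R : realType} {H : normedModType R} (K : set H) (y : H) : H :=
  xget 0 [set w | K w /\ forall z, K z -> `|w - y| ^+ 2 <= `|z - y| ^+ 2].

Definition abs_cont_on {R : realType} {H : normedModType R}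
  (a b : R) (g : R -> H) : Prop :=
  forall e : R, 0 < e -> exists d : R, 0 < d /\
    forall (n : nat) (a' b' : 'I_n -> R),
      (forall k, a <= a' k /\ a' k <= b' k /\ b' k <= b) ->
      (forall k l, k != l -> b' k <= a' l \/ b' l <= a' k) ->
      \sum_(k < n) (b' k - a' k) < d ->
      \sum_(k < n) `|g (b' k) - g (a' k)| < e.

(* Main.v *)
Require Import Defs.
From HB Require Import structures.
From mathcomp Require Import all_boot all_order all_algebra.
From mathcomp Require Import all_classical all_reals all_analysis.
From mathcomp Require Import measurable_realfun.
From mathcomp Require Import ring lra.
Import Order.TTheory GRing.Theory Num.Theory.
Import numFieldNormedType.Exports.
Local Open Scope classical_set_scope.
Local Open Scope ring_scope.

Section IP.
Context {R : realType} {H : normedModType R} {ip : H -> H -> R} (hip : inner_product ip).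

Lemma ip_sym u v : ip u v = ip v u. Proof. by case: hip. Qed.
Lemma ip_lin a u v w : ip (a *: u + v) w = a * ip u w + ip v w. Proof. by case: hip => _ []. Qed.
Lemma ip_nn u : ip u u = `|u| ^+ 2. Proof. by case: hip => _ []. Qed.
Lemma ip0l w : ip 0 w = 0.
Proof. have := ip_lin 1 0 0 w; rewrite scaler0 addr0 mul1r => h. by have := h; lra. Qed.
Lemma ipDl u v w : ip (u + v) w = ip u w + ip v w.
Proof. by rewrite -[u in LHS]scale1r ip_lin mul1r. Qed.
Lemma ipZl a u w : ip (a *: u) w = a * ip u w.
Proof. by rewrite -[a *: u]addr0 ip_lin ip0l addr0. Qed.
Lemma ipDr u v w : ip w (u + v) = ip w u + ip w v.
Proof. by rewrite ip_sym ipDl !(ip_sym w). Qed.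
Lemma ipZr a u w : ip w (a *: u) = a * ip w u.
Proof. by rewrite ip_sym ipZl ip_sym. Qed.
Lemma ipNl u w : ip (- u) w = - ip u w.
Proof. by rewrite -scaleN1r ipZl mulN1r. Qed.
Lemma ipNr u w : ip w (- u) = - ip w u.
Proof. by rewrite ip_sym ipNl ip_sym. Qed.
Lemma ip0r w : ip w 0 = 0.
Proof. by rewrite ip_sym ip0l. Qed.
Lemma ip_polar u v : ip u v = 2^-1 * (`|u + v| ^+ 2 - `|u| ^+ 2 - `|v| ^+ 2).
Proof.
rewrite -!ip_nn ipDl !ipDr (ip_sym v u).
have -> : ip u u + ip u v + (ip u v + ip v v) - ip u u - ip v v = 2 * ip u v by ring.
by rewrite mulrA mulVf ?mul1r // pnatr_eq0.
Qed.

Lemma ip_cvg {T : Type} (F : set_system T) {FF : Filter F} (u_ v_ : T -> H) u v :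
  u_ @ F --> u -> v_ @ F --> v -> (fun t => ip (u_ t) (v_ t)) @ F --> ip u v.
Proof.
move=> cu cv.
rewrite (_ : (fun t => _) = (fun t => 2^-1 * (`|u_ t + v_ t| ^+ 2 - `|u_ t| ^+ 2 - `|v_ t| ^+ 2))); last first.
  by apply/funext => t; rewrite ip_polar.
rewrite ip_polar.
apply: cvgM; first exact: cvg_cst.
apply: cvgB; first apply: cvgB.
- rewrite expr2; under eq_fun do rewrite expr2.
  have h : (fun x => `|u_ x + v_ x|) @ F --> `|u + v| by apply: cvg_norm; apply: cvgD.
  exact: (cvgM h h).
- rewrite expr2; under eq_fun do rewrite expr2.
  have h : (fun x => `|u_ x|) @ F --> `|u| by apply: cvg_norm.
  exact: (cvgM h h).
- rewrite expr2; under eq_fun do rewrite expr2.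
  have h : (fun x => `|v_ x|) @ F --> `|v| by apply: cvg_norm.
  exact: (cvgM h h).
Qed.
End IP.

Section Creep.
Context {R : realType}.
Notation mu := (@lebesgue_measure R).

Fixpoint rchain (U : set R) (lo hi : R) (G : seq (R * R)) : Prop :=
  match G with
  | [::] => lo <= hi
  | p :: G' => p.1 <= p.2 /\ p.2 <= hi /\ [set x | p.1 <= x <= p.2] `<=` U /\ rchain U lo p.1 G'
  end.

Definition sumlen (G : seq (R * R)) := \sum_(p <- G) (p.2 - p.1).
Definition sumvar (F : R -> R) (G : seq (R * R)) := \sum_(p <- G) `|F p.2 - F p.1|.

Lemma rchain_le {U lo hi G} : rchain U lo hi G -> lo <= hi.
Proof.
elim: G hi => [//|p G IH] hi /= [h1 [h2 [_ h3]]].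
by apply: le_trans (IH _ h3) _; apply: le_trans h1 h2.
Qed.

Lemma rchain_weak {U lo hi hi' G} : rchain U lo hi G -> hi <= hi' -> rchain U lo hi' G.
Proof.
case: G => [|p G] /=; first by move=> h1 h2; apply: le_trans h1 h2.
by move=> [h1 [h2 [h3 h4]]] h5; split=> //; split=> //; apply: le_trans h2 h5.
Qed.

Lemma rchain_len {U lo hi G} : open U -> rchain U lo hi G ->
  ((sumlen G)%:E <= mu (U `&` `]lo, hi]))%E.
Proof.
move=> oU; have mU : measurable U by exact: open_measurable.
elim: G hi => [|p G IH] hi /=.
  by move=> _; rewrite /sumlen big_nil measure_ge0.
move=> [h1 [h2 [h3 h4]]].
have lop := rchain_le h4.
rewrite /sumlen big_cons EFinD.
have -> : U `&` `]lo, hi] = (U `&` `]lo, p.1]) `|` (U `&` `]p.1, hi]).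
  apply/seteqP; split=> x /=; rewrite !in_itv /=.
  - move=> [Ux /andP[x1 x2]]; case: (leP x p.1) => xp.
      by left; split=> //; apply/andP.
    by right; split=> //; apply/andP.
  - case=> [[Ux /andP[x1 x2]]|[Ux /andP[x1 x2]]]; split=> //; apply/andP; split=> //.
    + by apply: le_trans x2 (le_trans h1 h2).
    + by apply: le_lt_trans lop x1.
rewrite measureU //; last 3 first.
- by apply: measurableI => //; exact: measurable_itv.
- by apply: measurableI => //; exact: measurable_itv.
- apply/seteqP; split=> x //=; rewrite !in_itv /=.
  by move=> [[_ /andP[_ x2]] [_ /andP[x3 _]]]; move: (le_lt_trans x2 x3); rewrite ltxx.
rewrite addeC; apply: leeD; first exact: IH.
have -> : ((p.2 - p.1)%:E = mu `]p.1, p.2])%E.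
  rewrite lebesgue_measure_itv /= lte_fin; case: ltP => // hp.
  have e : p.2 = p.1 by apply: le_anti; rewrite hp h1.
  by rewrite e subrr.
apply: le_measure; rewrite ?inE.
- exact: measurable_itv.
- by apply: measurableI => //; exact: measurable_itv.
move=> x /=; rewrite !in_itv /= => /andP[x1 x2]; split.
  by apply: h3 => /=; rewrite (ltW x1) x2.
by rewrite x1 (le_trans x2 h2).
Qed.


Lemma creep_eps (F : R -> R) (a b : R) (N : set R) (e eta : R) :
  a <= b -> mu.-negligible N -> 0 < e -> 0 < eta ->
  (exists2 delta, 0 < delta & forall U lo hi G, a <= lo -> hi <= b ->
     rchain U lo hi G -> sumlen G < delta -> sumvar F G < eta) ->
  (forall t, a < t -> t < b -> ~ N t -> exists2 r, 0 < r & forall v, `|v - t| < r ->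
     (t < v -> F v - F t <= e * (v - t)) /\ (v < t -> F t - F v <= e * (t - v))) ->
  F b - F a <= e * (b - a) + eta.
Proof.
move=> hab hN e0 eta0 [delta d0 hd] hD.
have [N2 [mN2 N20 NN2]] : mu.-negligible (N `|` [set a] `|` [set b]).
  apply: negligibleU; first apply: negligibleU => //.
  - by exists [set a]; split => //; exact: lebesgue_measure_set1.
  - by exists [set b]; split => //; exact: lebesgue_measure_set1.
have [U [oU N2U hUd]] : exists U : set R, [/\ open U, N2 `<=` U & (mu (U `\` N2) < delta%:E)%E].
  apply: lebesgue_regularity_outer => //; apply: (@le_lt_trans _ _ 0%E); [ | exact: ltry].
  by rewrite le_eqVlt; apply/orP; left; apply/eqP; exact: N20.
have mU : measurable U by exact: open_measurable.
have muU : (mu U < delta%:E)%E.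
  have -> : U = (U `\` N2) `|` N2 by rewrite setUC setDUK.
  apply: le_lt_trans (measureU2 _ _ _) _ => //; first exact: measurableD.
  by rewrite [X in (_ + X)%E](_ : _ = 0%E) ?adde0 //; exact: N20.
have hsum : forall lo hi G, a <= lo -> hi <= b -> rchain U lo hi G -> sumvar F G < eta.
  move=> lo hi G alo hib hG; apply: (hd U lo hi G alo hib hG).
  rewrite -lte_fin; apply: le_lt_trans muU.
  have h1 := rchain_len oU hG. apply: (le_trans h1).
  by apply: le_measure; rewrite ?inE //; apply: measurableI => //; exact: measurable_itv.
pose claim u := exists G, rchain U a u G /\ F u - F a <= e * (u - a) + sumvar F G.
pose S := [set s | a <= s <= b /\ forall u, a <= u <= s -> claim u].
have claima : claim a by exists [::]; split => //=; rewrite /sumvar big_nil !subrr mulr0 addr0.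
have Sa : S a.
  split; first by rewrite lexx hab.
  by move=> u /andP[h1 h2]; have -> : u = a by apply: le_anti; rewrite h1 h2.
have hsup : has_sup S by split; [exists a | exists b => s [/andP[]]].
set s := sup S.
have las : a <= s by apply: sup_upper_bound.
have lsb : s <= b by apply: ge_sup; [exists a | move=> y [/andP[]]].
have below : forall u, a <= u -> u < s -> claim u.
  move=> u au us; have su : 0 < s - u by rewrite subr_gt0.
  have [w [_ Sw] uw] := sup_adherent su hsup; rewrite opprB addrC subrK in uw.
  apply: Sw; rewrite au; apply: ltW uw.
suff : claim b.
  move=> [G [hG hF]]; apply: le_trans hF _; rewrite lerD2l; apply: ltW; exact: hsum hG.
have Sclaim : forall w, S w -> claim w.
  by move=> w [/andP[h1 h2] h3]; apply: h3; rewrite h1 lexx.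
have [Us|nUs] := pselect (U s).
- have /nbhs_ballP [r /= r0 hr] := oU s Us.
  have r20 : 0 < r / 2 by rewrite divr_gt0.
  pose u := Num.max a (s - r / 2).
  have ua : a <= u by rewrite le_max lexx.
  have us : u <= s by rewrite ge_max las /= lerBlDr lerDl ltW.
  have us2 : s - r / 2 <= u by rewrite le_max lexx orbT.
  have [G [hG hFu]] : claim u.
    case: (leP (s - r / 2) a) => h.
      by have -> : u = a by rewrite /u max_l.
    by apply: below => //; rewrite /u max_r ?ltW // ltrBlDr ltrDl.
  pose w := Num.min b (s + r / 2).
  have ext : forall v, u <= v -> v <= w -> claim v.
    move=> v uv vw; exists ((u, v) :: G); split.
      split => //=; split => //; split => //.
      move=> x /andP[x1 x2]; apply: hr; rewrite /ball /= ltr_norml; apply/andP; split.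
        move: vw; rewrite le_min => /andP[_ h].
        have : x <= s + r / 2 by apply: le_trans x2 h.
        have : r / 2 < r by rewrite ltr_pdivrMr // ltr_pMr // ltr1n.
        lra.
      have : s - r / 2 <= x by apply: le_trans us2 x1.
      have : r / 2 < r by rewrite ltr_pdivrMr // ltr_pMr // ltr1n.
      lra.
    rewrite /sumvar big_cons /=.
    have : F v - F u <= `|F v - F u| by apply: ler_norm.
    have : e * (u - a) <= e * (v - a) by rewrite ler_pM2l // lerD2r.
    move: hFu; rewrite /sumvar; lra.
  have Sw : S w.
    split.
      apply/andP; split; last by rewrite ge_min lexx.
      rewrite le_min (le_trans las lsb) /=; apply: le_trans las _; rewrite lerDl ltW //.
    move=> v /andP[av vw]; case: (ltP v u) => vu.
      by apply: below => //; apply: lt_le_trans vu us.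
    exact: ext.
  have ws : w <= s by apply: sup_upper_bound.
  have sb : b <= s.
    move: ws; rewrite /w ge_min => /orP[//|].
    by rewrite gerDl leNgt r20.
  have wb : w = b by rewrite /w min_l // (le_trans sb) // lerDl ltW.
  by rewrite -wb; exact: Sclaim.
- have sN : ~ N s by move=> Ns; apply: nUs; apply: N2U; apply: NN2; left; left.
  have sa : s != a by apply/eqP => sa; apply: nUs; apply: N2U; apply: NN2; left; right.
  have sb : s != b by apply/eqP => sb; apply: nUs; apply: N2U; apply: NN2; right.
  have as' : a < s by rewrite lt_neqAle eq_sym sa las.
  have sb' : s < b by rewrite lt_neqAle sb lsb.
  have [r r0 hr] := hD s as' sb' sN.
  have r20 : 0 < r / 2 by rewrite divr_gt0.
  have r2r : r / 2 < r by rewrite ltr_pdivrMr // ltr_pMr // ltr1n.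
  pose u := Num.max a (s - r / 2).
  have ua : a <= u by rewrite le_max lexx.
  have us : u < s by rewrite gt_max as' /= ltrBlDr ltrDl.
  have us2 : s - r / 2 <= u by rewrite le_max lexx orbT.
  have [G [hG hFu]] := below u ua us.
  have hsu : F s - F u <= e * (s - u).
    have hus : `|u - s| < r by rewrite ltr_norml; apply/andP; split; lra.
    by have [_ h] := hr u hus; apply: h.
  pose w := Num.min b (s + r / 2).
  have ext : forall v, s <= v -> v <= w -> claim v.
    move=> v sv vw; exists G; split.
      by apply: (rchain_weak hG); apply: le_trans (ltW us) sv.
    have hvs : F v - F s <= e * (v - s).
      case: (ltP s v) => sv'.
        move: vw; rewrite le_min => /andP[_ h].
        have hvs : `|v - s| < r by rewrite ltr_norml; apply/andP; split; lra.
        by have [h' _] := hr v hvs; apply: h'.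
      have -> : v = s by apply: le_anti; rewrite sv sv'.
      by rewrite !subrr mulr0.
    have : e * (v - s) + e * (s - u) + e * (u - a) = e * (v - a) by ring.
    move: hFu; lra.
  have Sw : S w.
    split.
      apply/andP; split; last by rewrite ge_min lexx.
      rewrite le_min (le_trans las lsb) /=; apply: le_trans las _; rewrite lerDl ltW //.
    move=> v /andP[av vw]; case: (ltP v s) => vs.
      exact: below.
    exact: ext.
  have ws : w <= s by apply: sup_upper_bound.
  move: ws; rewrite /w ge_min => /orP[h|]; first by move: sb'; rewrite ltNge h.
  by rewrite gerDl leNgt r20.
Qed.



Lemma deriv_le0_local (F : R -> R) t e : derivable F t 1 -> derive1 F t <= 0 -> 0 < e ->
  exists2 r, 0 < r & forall v, `|v - t| < r ->
     (t < v -> F v - F t <= e * (v - t)) /\ (v < t -> F t - F v <= e * (t - v)).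
Proof.
move=> hder hle e0.
have hc : (fun h => h^-1 *: ((F \o shift t) (h *: 1) - F t)) @ 0^' --> 'D_1 F t := hder.
rewrite derive1E in hle.
have H : \forall h \near 0^', h^-1 *: ((F \o shift t) (h *: 1) - F t) < e.
  by apply: (cvgr_lt _ hc); exact: le_lt_trans hle e0.
move: H => /nbhs_ballP [r /= r0 hr]; exists r => // v hv.
have hb : ball 0 r (v - t) by rewrite /ball /= sub0r normrN.
split => hvt.
- have h0 : v - t != 0 by rewrite subr_eq0 gt_eqF.
  have := hr _ hb h0; rewrite /= -[X in F X]/((v - t) * 1 + t) mulr1 subrK.
  rewrite -[_ *: _]/(_ * _) => h.
  have vt0 : 0 < v - t by rewrite subr_gt0.
  rewrite -(ltr_pM2l vt0) mulrA mulfV ?gt_eqF // mul1r in h.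
  by rewrite mulrC ltW.
- have h0 : v - t != 0 by rewrite subr_eq0 lt_eqF.
  have := hr _ hb h0; rewrite /= -[X in F X]/((v - t) * 1 + t) mulr1 subrK.
  rewrite -[_ *: _]/(_ * _) => h.
  have vt0 : 0 < t - v by rewrite subr_gt0.
  have h' : (t - v)^-1 * (F t - F v) < e.
    by rewrite -opprB invrN mulNr -mulrN opprB.
  rewrite -(ltr_pM2l vt0) mulrA mulfV ?gt_eqF // mul1r in h'.
  by rewrite mulrC ltW.
Qed.

Lemma creep (F : R -> R) (a b : R) (N : set R) :
  a <= b -> mu.-negligible N ->
  (forall eta, 0 < eta -> exists2 delta, 0 < delta & forall U lo hi G, a <= lo -> hi <= b ->
     rchain U lo hi G -> sumlen G < delta -> sumvar F G < eta) ->
  (forall t, a < t -> t < b -> ~ N t -> derivable F t 1 /\ derive1 F t <= 0) ->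
  F b <= F a.
Proof.
move=> hab hN hAC hD.
have key : forall e, 0 < e -> F b - F a <= e * (b - a) + e.
  move=> e e0; apply: (@creep_eps F a b N e e hab hN e0 e0 (hAC e e0)).
  move=> t ta tb Nt; have [h1 h2] := hD t ta tb Nt; exact: (@deriv_le0_local F t e h1 h2 e0).
rewrite leNgt; apply/negP => hlt.
pose d := F b - F a.
have d0 : 0 < d by rewrite subr_gt0.
have ba0 : 0 < b - a + 2 by lra.
pose e := d / (b - a + 2).
have e0 : 0 < e by rewrite divr_gt0.
have he : e * (b - a + 2) = d by rewrite /e mulfVK ?gt_eqF.
have := key e e0; rewrite -/d.
have : e * (b - a) + e < d.
  rewrite -he; have : e * (b - a + 2) = e * (b - a) + e + e by ring.
  lra.
lra.
Qed.

Lemma rchain_mem {U lo hi G} : rchain U lo hi G ->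
  forall p, p \in G -> lo <= p.1 /\ p.1 <= p.2 /\ p.2 <= hi.
Proof.
elim: G hi => [//|q G IH] hi /= [h1 [h2 [_ h4]]] p; rewrite inE => /orP[/eqP ->|pG].
  by split; [exact: rchain_le h4 | split].
have [a1 [a2 a3]] := IH _ h4 p pG; split=> //; split=> //.
exact: le_trans a3 (le_trans h1 h2).
Qed.

Lemma rchain_order {U lo hi G} : rchain U lo hi G ->
  forall i j, (i < j)%N -> (j < size G)%N -> (nth (0,0) G j).2 <= (nth (0,0) G i).1.
Proof.
elim: G hi => [//|q G IH] hi /= [h1 [h2 [_ h4]]] [|i] [|j] //= ij jG.
  by have [_ [_ ]] := rchain_mem h4 _ (mem_nth (0,0) jG).
exact: IH h4 i j ij jG.
Qed.

Lemma rchain_ac {H : normedModType R} (g : R -> H) (a b : R) U lo hi G (e d : R) :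
  (forall (n : nat) (a' b' : 'I_n -> R),
      (forall k, a <= a' k /\ a' k <= b' k /\ b' k <= b) ->
      (forall k l, k != l -> b' k <= a' l \/ b' l <= a' k) ->
      \sum_(k < n) (b' k - a' k) < d ->
      \sum_(k < n) `|g (b' k) - g (a' k)| < e) ->
  a <= lo -> hi <= b -> rchain U lo hi G -> sumlen G < d ->
  \sum_(p <- G) `|g p.2 - g p.1| < e.
Proof.
move=> hd alo hib hG hl.
have := hd (size G) (fun k => (nth (0,0) G k).1) (fun k => (nth (0,0) G k).2).
rewrite (big_nth (0,0)) big_mkord; apply.
- move=> k; have [k1 [k2 k3]] := rchain_mem hG _ (mem_nth (0,0) (ltn_ord k)).
  split; first exact: le_trans alo k1.
  by split => //; exact: le_trans k3 hib.
- move=> k l kl; case: (ltngtP k l) => [lt|gt|eq].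
  + by right; apply: (rchain_order hG) => //; exact: ltn_ord.
  + by left; apply: (rchain_order hG) => //; exact: ltn_ord.
  + by move: kl; rewrite (val_inj eq) eqxx.
- by move: hl; rewrite /sumlen (big_nth (0,0)) big_mkord.
Qed.

End Creep.

Section Proj.
Context {R : realType} {H : normedModType R} (ip : H -> H -> R) (hip : inner_product ip).

Lemma var_ineq (A B : R) : 0 <= B -> (forall s, 0 < s -> s <= 1 -> 0 <= 2 * s * A + s ^+ 2 * B) -> 0 <= A.
Proof.
move=> B0 h; rewrite leNgt; apply/negP => A0.
have BA : 0 < B - A by lra.
pose s := - A / (B - A).
have s0 : 0 < s by rewrite /s divr_gt0 // oppr_gt0.
have s1 : s <= 1 by rewrite /s ler_pdivrMr // mul1r; lra.
have hs : s * (B - A) = - A by rewrite /s mulfVK ?gt_eqF.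
have := h s s0 s1.
have e : 2 * s * A + s ^+ 2 * B = s * (2 * A + s * B) by ring.
rewrite e pmulr_rge0 // => h2.
have : (2 * A + s * B) * (B - A) = A * (B - 2 * A).
  have : (2 * A + s * B) * (B - A) = 2 * A * (B - A) + B * (s * (B - A)) by ring.
  rewrite hs => ->; ring.
have : A * (B - 2 * A) < 0 by rewrite nmulr_rlt0 //; lra.
move=> h3 h4; have : 0 <= (2 * A + s * B) * (B - A) by rewrite mulr_ge0 // ltW.
lra.
Qed.

Lemma proj_ineq (m : nat) (gs : 'I_m -> H) (y v : H) (c : R) (i : 'I_m) :
  0 < c -> c *: v + proj_onto (set_translate (conv_hull gs) y) 0 = 0 ->
  ip (gs i + y) v <= - c * `|v| ^+ 2.
Proof.
move=> c0; set K := set_translate _ _; rewrite /proj_onto.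
set P := [set w | _].
move=> /eqP; rewrite addr_eq0 => /eqP hp.
have [[w Pw]|nP] := pselect (exists w, P w); last first.
  rewrite xgetPN in hp; last by move=> w Pw; apply: nP; exists w.
  have v0 : v = 0.
    by apply/eqP; move: hp => /eqP; rewrite oppr0 scaler_eq0 gt_eqF.
  by rewrite v0 (ip0r hip) normr0 expr0n /= mulr0.
have [Kp hmin] := xgetPex 0 (ex_intro _ w Pw).
move: hp Kp hmin; set p := xget 0 P => hp Kp hmin.
pose d := gs i + y - p.
have hd : d = gs i + y - p by [].
clearbody d.
have key : 0 <= ip p d.
  apply: (var_ineq (ip p d) (`|d| ^+ 2)) => // s s0 s1.
  have Kz : K (p + s *: d).
    case: Kp => c1 [l [l0 [l1 hc1]]] hcp.
    exists (\sum_(j < m) ((1 - s) * l j + (if j == i then s else 0)) *: gs j).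
      exists (fun j => (1 - s) * l j + (if j == i then s else 0)); split.
        by move=> j; apply: addr_ge0; [apply: mulr_ge0 => //; lra | case: ifP => // _; lra].
      split=> //.
      rewrite big_split /= -mulr_sumr l1 mulr1 -big_mkcond /= big_pred1_eq; ring.
    rewrite hd -hcp hc1.
    under eq_bigr do rewrite scalerDl.
    rewrite big_split /=.
    under eq_bigr do rewrite -scalerA.
    rewrite -scaler_sumr.
    have -> : \sum_(j < m) (if j == i then s else 0) *: gs j = s *: gs i.
      rewrite (bigD1 i) //= eqxx big1 ?addr0 // => j /negbTE ->; exact: scale0r.
    set S := \sum_(j < m) l j *: gs j.
    have -> : gs i + y - (S + y) = gs i - S by rewrite opprD addrACA subrr addr0.
    rewrite scalerBr scalerBl scale1r.
    by rewrite addrAC -!addrA; congr (_ + _); rewrite addrC addrA.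
  have := hmin _ Kz; rewrite !subr0 -!(ip_nn hip).
  rewrite !(ipDl hip) !(ipDr hip) !(ipZl hip) !(ipZr hip) (ip_sym hip d p).
  move=> h; have : 0 <= 2 * s * ip p d + s ^+ 2 * ip d d by lra.
  by rewrite (ip_nn hip).
have hp' : p = - (c *: v) by rewrite hp opprK.
rewrite hd (ipDr hip (gs i + y)) (ipNr hip) (ip_nn hip) hp' normrN normrZ (ipNl hip) (ipZl hip) in key.
rewrite (ip_sym hip); move: key; rewrite gtr0_norm //.
set X := ip v (gs i + y); set N := `|v| ^+ 2 => key.
have N0 : 0 <= N by rewrite /N exprn_ge0.
rewrite exprMn in key; rewrite -/N in key.
nra.
Qed.

End Proj.

Section Deriv.
Context {R : realType} {H : normedModType R} {ip : H -> H -> R} (hip : inner_product ip).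

Lemma shift_cvg (g : R -> H) (t : R) : {for t, continuous g} ->
  (fun h : R => g (h *: 1 + t)) @ 0^' --> g t.
Proof.
move=> cg; apply: cvg_within_filter.
have h1 : (fun h : R => h *: 1 + t) @ nbhs 0 --> t.
  rewrite -[X in _ --> X](add0r t).
  apply: cvgD; last exact: cvg_cst.
  rewrite -[X in _ --> X](scale0r 1).
  apply: cvgZl; exact: cvg_id.
exact: (cvg_comp _ _ h1 cg).
Qed.

Lemma F1_deriv (f : H -> R) (g : H -> H) (x : R -> H) (v : H) (t : R) :
  differentiable f (x t) -> (forall w, 'd f (x t) w = ip (g (x t)) w) ->
  is_derive t 1 x v ->
  derivable (f \o x) t 1 /\ 'D_1 (f \o x) t = ip (g (x t)) v.
Proof.
move=> df hdf hx.
have dx : differentiable x t by apply/derivable1_diffP; exact: ex_derive.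
have dF : differentiable (f \o x) t := differentiable_comp dx df.
split; first exact/derivable1_diffP.
rewrite deriveE // diff_comp //= -(deriveE _ dx) hdf; congr ip; exact: (@derive_val _ _ _ _ _ _ _ hx).
Qed.

Lemma F2_deriv (xd : R -> H) (a : H) (t : R) :
  is_derive t 1 xd a ->
  derivable (fun s => 2^-1 * `|xd s| ^+ 2) t 1 /\
  'D_1 (fun s => 2^-1 * `|xd s| ^+ 2) t = ip a (xd t).
Proof.
move=> hxd.
have cxd : {for t, continuous xd}.
  by apply: differentiable_continuous; apply/derivable1_diffP; exact: ex_derive.
have hq : (fun h : R => h^-1 *: (xd (h *: 1 + t) - xd t)) @ 0^' --> a.
  rewrite -(@derive_val _ _ _ _ _ _ _ hxd); exact: (@ex_derive _ _ _ _ _ _ _ hxd).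
have hlim : (fun h : R => h^-1 *: ((fun s => 2^-1 * `|xd s| ^+ 2) (h *: 1 + t)
              - (fun s => 2^-1 * `|xd s| ^+ 2) t)) @ 0^' --> ip a (xd t).
  have -> : (fun h : R => h^-1 *: ((fun s => 2^-1 * `|xd s| ^+ 2) (h *: 1 + t)
              - (fun s => 2^-1 * `|xd s| ^+ 2) t)) =
      (fun h => 2^-1 * ip (h^-1 *: (xd (h *: 1 + t) - xd t)) (xd (h *: 1 + t) + xd t)).
    apply/funext => h /=.
    rewrite (ipZl hip) (ipDl hip) !(ipDr hip) (ipNl hip) (ipNl hip) !(ip_nn hip).
    rewrite (ip_sym hip (xd t)) -[_ *: _]/(_ * _); ring.
  have -> : ip a (xd t) = 2^-1 * ip a (xd t + xd t).
    by rewrite (ipDr hip); lra.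
  apply: cvgM; first exact: cvg_cst.
  apply: (ip_cvg hip) => //.
  apply: cvgD; [exact: shift_cvg | exact: cvg_cst].
have hder : derivable (fun s => 2^-1 * `|xd s| ^+ 2) t 1 by apply/cvg_ex; exists (ip a (xd t)).
split => //.
exact: (cvg_lim _ hlim).
Qed.

End Deriv.

Section Good.
Context {R : realType}.

Definition good {V : topologicalType} (t0 : R) (phi : R -> V) :=
  (forall u, t0 < u -> {for u, continuous phi}) /\ phi @ t0^'+ --> phi t0.

Lemma good_within {V : normedModType R} t0 (phi : R -> V) s t :
  good t0 phi -> t0 <= s -> s < t -> {within `[s, t], continuous phi}.
Proof.
move=> [h1 h2] t0s st; apply/continuous_within_itvP => //; split.
- move=> u; rewrite in_itv /= => /andP[su ut]; apply: h1; exact: le_lt_trans t0s su.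
- case: (ltP t0 s) => ts.
    by apply: cvg_at_right_filter; apply: h1.
  by have -> : s = t0 by apply: le_anti; rewrite ts t0s.
- by apply: cvg_at_left_filter; apply: h1; apply: le_lt_trans t0s st.
Qed.

Lemma good_comp {V W : topologicalType} t0 (phi : R -> V) (g : V -> W) :
  good t0 phi -> continuous g -> good t0 (g \o phi).
Proof.
move=> [h1 h2] cg; split.
  by move=> u tu; apply: continuous_comp; [exact: h1 | exact: cg].
exact: (cvg_comp _ _ h2 (cg _)).
Qed.

Lemma good_ip {H : normedModType R} {ip : H -> H -> R} (hip : inner_product ip) t0 (phi psi : R -> H) :
  good t0 phi -> good t0 psi -> good t0 (fun u => ip (phi u) (psi u)).
Proof.
move=> [h1 h2] [k1 k2]; split.
  by move=> u tu; apply: (ip_cvg hip); [exact: h1 | exact: k1].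
exact: (ip_cvg hip).
Qed.

Lemma at_right_shift {V : topologicalType} (g : R -> V) (a : R) (l : V) :
  (fun h => g (a + h)) @ 0^'+ --> l -> g @ a^'+ --> l.
Proof.
move=> hg A /hg /nbhs_ballP [r /= r0 hr]; apply/nbhs_ballP; exists r => //= u hu au.
have := hr (u - a); rewrite [a + _]addrC subrK; apply.
  by move: hu; rewrite /ball /= sub0r normrN -normrN opprB.
by rewrite subr_gt0.
Qed.

End Good.

Lemma W_mono {R : realType} {H : normedModType R} {ip : H -> H -> R} (hip : inner_product ip)
  (f : H -> R) (g : H -> H) (x xd : R -> H) (t0 : R) (N : set R) :
  is_gradient ip f g -> continuous g ->
  (forall t, t0 < t -> is_derive t 1 x (xd t)) ->
  ((fun h => h^-1 *: (x (t0 + h) - x t0)) @ at_right 0 --> xd t0) ->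
  {within `[t0, +oo[, continuous xd} ->
  (forall T, t0 <= T -> abs_cont_on t0 T xd) ->
  lebesgue_measure.-negligible N ->
  (forall t, t0 < t -> ~ N t -> derivable (fun t => f (x t) + 2^-1 * `|xd t| ^+ 2) t 1 /\
     derive1 (fun t => f (x t) + 2^-1 * `|xd t| ^+ 2) t <= 0) ->
  forall s t, t0 <= s -> s <= t ->
    f (x t) + 2^-1 * `|xd t| ^+ 2 <= f (x s) + 2^-1 * `|xd s| ^+ 2.
Proof.
move=> hg hgc hx hx0 hxdc hAC hN hD s t t0s st.
have fc : continuous f.
  by move=> u; apply: differentiable_continuous; case: (hg u).
have gx : good t0 x.
  split.
    move=> u tu; apply: differentiable_continuous; apply/derivable1_diffP.
    exact: (@ex_derive _ _ _ _ _ _ _ (hx u tu)).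
  apply: at_right_shift.
  have h1 : (fun h : R => h *: (h^-1 *: (x (t0 + h) - x t0))) @ 0^'+ --> (0 : R) *: xd t0.
    by apply: cvgZ => //; apply: cvg_at_right_filter; exact: cvg_id.
  rewrite scale0r in h1.
  have h2 : (fun h : R => h *: (h^-1 *: (x (t0 + h) - x t0)) + x t0) @ 0^'+ --> 0 + x t0.
    by apply: cvgD => //; exact: cvg_cst.
  rewrite add0r in h2.
  apply: cvg_trans h2; apply: near_eq_cvg; near=> h.
  rewrite scalerA mulfV ?scale1r ?subrK //.
have gxd : good t0 xd.
  move/continuous_within_itvcyP : hxdc => [h1 h2]; split => //.
  by move=> u tu; apply: h1; rewrite in_itv /= tu.
have gF1 : good t0 (f \o x) := good_comp _ _ _ gx fc.
have gD1 : good t0 (fun u => ip (g (x u)) (xd u)) := good_ip hip _ _ _ (good_comp _ _ _ gx hgc) gxd.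
have gD1n : good t0 (Num.norm \o (fun u => ip (g (x u)) (xd u))) := good_comp _ _ _ gD1 norm_continuous.
have gxdn : good t0 (Num.norm \o xd) := good_comp _ _ _ gxd norm_continuous.
case: (eqVneq s t) => [-> //|snt].
have {st snt} st : s < t by rewrite lt_neqAle snt st.
have [cL cLin hL] := EVT_max (ltW st) (good_within _ _ _ _ gD1n t0s st).
set L := `|ip (g (x cL)) (xd cL)| in hL.
have [cM cMin hM] := EVT_max (ltW st) (good_within _ _ _ _ gxdn t0s st).
set M := `|xd cM| in hM.
have L0 : 0 <= L by rewrite /L normr_ge0.
have M0 : 0 <= M by rewrite /M normr_ge0.
have lip1 : forall c d, s <= c -> c <= d -> d <= t -> `|f (x d) - f (x c)| <= L * (d - c).
  move=> c d sc cd dt; case: (eqVneq c d) => [-> |cnd].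
    by rewrite !subrr normr0 mulr0.
  have {cd cnd} cd : c < d by rewrite lt_neqAle cnd cd.
  have t0c : t0 <= c by apply: le_trans t0s sc.
  have hder : forall u, u \in `]c, d[ -> is_derive u 1 (f \o x) (ip (g (x u)) (xd u)).
    move=> u; rewrite in_itv /= => /andP[h1 h2].
    have tu : t0 < u by apply: le_lt_trans t0c h1.
    have [df hdf] := hg (x u).
    have [d1 e1] := @F1_deriv _ _ ip f g x (xd u) u df hdf (hx u tu).
    exact: DeriveDef.
  have [xi xiin ->] := @MVT _ (f \o x) (fun u => ip (g (x u)) (xd u)) c d cd hder (good_within _ _ _ _ gF1 t0c cd).
  rewrite normrM (ger0_norm (_ : 0 <= d - c)); last by rewrite subr_ge0 ltW.
  apply: ler_wpM2r; first by rewrite subr_ge0 ltW.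
  apply: (hL xi); move: xiin; rewrite !in_itv /= => /andP[h1 h2].
  by rewrite (le_trans sc (ltW h1)) (le_trans (ltW h2) dt).
have lip2 : forall c d, s <= c -> c <= t -> s <= d -> d <= t ->
    `|2^-1 * `|xd d| ^+ 2 - 2^-1 * `|xd c| ^+ 2| <= M * `|xd d - xd c|.
  move=> c d sc ct sd dt.
  have hc : `|xd c| <= M by apply: (hM c); rewrite in_itv /= sc ct.
  have hd : `|xd d| <= M by apply: (hM d); rewrite in_itv /= sd dt.
  have hdist : `| `|xd d| - `|xd c| | <= `|xd d - xd c| by exact: ler_dist_dist.
  have -> : 2^-1 * `|xd d| ^+ 2 - 2^-1 * `|xd c| ^+ 2 =
            2^-1 * ((`|xd d| - `|xd c|) * (`|xd d| + `|xd c|)) by ring.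
  rewrite normrM normrM (ger0_norm (addr_ge0 (normr_ge0 _) (normr_ge0 _))) gtr0_norm ?invr_gt0 //.
  set A := `| `|xd d| - `|xd c| |; set B := `|xd d| + `|xd c|.
  have B0 : 0 <= B by rewrite /B addr_ge0.
  have B2 : B <= 2 * M by rewrite /B; lra.
  have A0 : 0 <= A by rewrite /A normr_ge0.
  set E := `|xd d - xd c| in hdist *.
  have E0 : 0 <= E by rewrite /E normr_ge0.
  have h1 : A * B <= E * B by rewrite ler_wpM2r.
  have h2 : E * B <= E * (2 * M) by rewrite ler_wpM2l.
  lra.
apply: (@creep _ (fun u => f (x u) + 2^-1 * `|xd u| ^+ 2) s t N (ltW st) hN); last first.
  move=> u su ut Nu; apply: hD => //; exact: le_lt_trans t0s su.
move=> eta eta0.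
have e0 : 0 < eta / (2 * (M + 1)) by rewrite divr_gt0 // mulr_gt0 //; lra.
have [d1 [d10 hd1]] := hAC t (le_trans t0s (ltW st)) _ e0.
have e1 : 0 < eta / (2 * (L + 1)) by rewrite divr_gt0 // mulr_gt0 //; lra.
exists (Num.min d1 (eta / (2 * (L + 1)))); first by rewrite lt_min d10 e1.
move=> U lo hi G slo hit hG; rewrite lt_min => /andP[hl1 hl2].
have hsx := @rchain_ac R H xd t0 t U lo hi G _ _ hd1 (le_trans t0s slo) hit hG hl1.
have hmem := rchain_mem hG.
have hsl : 0 <= sumlen G.
  rewrite /sumlen big_seq; apply: sumr_ge0 => p pG; have [_ [h2 _]] := hmem p pG.
  by rewrite subr_ge0.
have step : sumvar (fun u => f (x u) + 2^-1 * `|xd u| ^+ 2) G <=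
    L * sumlen G + M * \sum_(p <- G) `|xd p.2 - xd p.1|.
  rewrite /sumvar /sumlen !mulr_sumr -big_split /= !big_seq.
  apply: ler_sum => p pG; have [h1 [h2 h3]] := hmem p pG.
  have sp1 : s <= p.1 by apply: le_trans slo h1.
  have p2t : p.2 <= t by apply: le_trans h3 hit.
  have p1t : p.1 <= t by apply: le_trans h2 p2t.
  have sp2 : s <= p.2 by apply: le_trans sp1 h2.
  have -> : f (x p.2) + 2^-1 * `|xd p.2| ^+ 2 - (f (x p.1) + 2^-1 * `|xd p.1| ^+ 2) =
      (f (x p.2) - f (x p.1)) + (2^-1 * `|xd p.2| ^+ 2 - 2^-1 * `|xd p.1| ^+ 2) by ring.
  apply: le_trans (ler_normD _ _) _; apply: lerD.
    exact: lip1.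
  exact: lip2.
apply: le_lt_trans step _.
set S := \sum_(p <- G) _ in hsx *.
have S0 : 0 <= S by rewrite /S big_seq; apply: sumr_ge0 => p _; exact: normr_ge0.
have hLs : L * sumlen G <= L * (eta / (2 * (L + 1))) by apply: ler_wpM2l => //; exact: ltW.
have hMs : M * S <= M * (eta / (2 * (M + 1))) by apply: ler_wpM2l => //; exact: ltW.
have hL1 : L * (eta / (2 * (L + 1))) < eta / 2.
  have hq : eta / (2 * (L + 1)) * (2 * (L + 1)) = eta.
    by rewrite mulfVK // gt_eqF // mulr_gt0 //; lra.
  move: hq e1; set q := eta / (2 * (L + 1)) => hq q0; nra.
have hM1 : M * (eta / (2 * (M + 1))) < eta / 2.
  have hq : eta / (2 * (M + 1)) * (2 * (M + 1)) = eta.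
    by rewrite mulfVK // gt_eqF // mulr_gt0 //; lra.
  move: hq e0; set q := eta / (2 * (M + 1)) => hq q0; nra.
lra.
Unshelve. all: by end_near.
Qed.

Theorem proposition4p1 (R : realType) (H : completeNormedModType R)
  (ip : H -> H -> R) (m : nat) (f : 'I_m -> H -> R) (grad : 'I_m -> H -> H)
  (alpha t0 : R) (x0 v0 : H) (x xd xdd : R -> H) :
  inner_product ip ->
  (forall i, convex_fun (f i)) ->
  (forall i, is_gradient ip (f i) (grad i)) ->
  (forall i, continuous (grad i)) ->
  0 < alpha -> 0 < t0 ->
  (* x is C^1 on [t0, +oo) with derivative xd *)
  (forall t, t0 < t -> is_derive t 1 x (xd t)) ->
  ((fun h => h^-1 *: (x (t0 + h) - x t0)) @ at_right 0 --> xd t0) ->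
  {within `[t0, +oo[, continuous xd} ->
  (* xd is absolutely continuous on every [t0, T] *)
  (forall T, t0 <= T -> abs_cont_on t0 T xd) ->
  (* xdd is (weakly) measurable and xd is its (weak) integral *)
  (forall h : H, measurable_fun `[t0, +oo[ (fun s => ip (xdd s) h)) ->
  (forall (h : H) (t : R), t0 <= t ->
     (lebesgue_measure).-integrable `[t0, t] (fun s => (ip (xdd s) h)%:E) /\
     ip (xd t) h = ip (xd t0) h + Rintegral lebesgue_measure `[t0, t] (fun s => ip (xdd s) h)) ->
  (* d/dt xd = xdd almost everywhere *)
  {ae lebesgue_measure, forall t, t0 < t -> is_derive t 1 xd (xdd t)} ->
  (* the equation holds for almost every t > t0 *)
  {ae lebesgue_measure, forall t, t0 < t ->
     (alpha / t) *: xd t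
     + proj_onto (set_translate (conv_hull (fun i => grad i (x t))) (xdd t)) 0 = 0} ->
  (* initial conditions *)
  x t0 = x0 -> xd t0 = v0 ->
  forall i : 'I_m,
    let W := fun t => f i (x t) + 2^-1 * `|xd t| ^+ 2 in
    {ae lebesgue_measure, forall t, t0 < t ->
        derivable W t 1 /\ derive1 W t <= - (alpha / t) * `|xd t| ^+ 2}
    /\ (forall s t, t0 <= s -> s <= t -> W t <= W s)
    /\ exists l : \bar R, l != +oo%E /\
         ((fun t => (W t)%:E) @ +oo --> l) /\
         ((exists M : R, forall y : H, M <= f i y) -> l \is a fin_num).
Proof.
move=> hip hconv hgrad hgc alpha0 t00 hx hx0 hxdc hAC hmeas hint hdd heq _ _ i W.
have part1 : {ae lebesgue_measure, forall t, t0 < t ->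
        derivable W t 1 /\ derive1 W t <= - (alpha / t) * `|xd t| ^+ 2}.
  have hN := negligibleU hdd heq.
  apply: (negligibleS _ hN); rewrite -setCI; apply: subsetC => t [/= h1 h2] tt0.
  have [df hdf] := hgrad i (x t).
  have [d1 e1] := @F1_deriv _ _ ip (f i) (grad i) x (xd t) t df hdf (hx t tt0).
  have [d2 e2] := F2_deriv hip _ _ _ (h1 tt0).
  have -> : W = (f i \o x) + (fun s => 2^-1 * `|xd s| ^+ 2) by [].
  split; first exact: derivableD.
  rewrite derive1E deriveD // e1 e2 -(ipDl hip).
  apply: (@proj_ineq _ _ _ hip m (fun j => grad j (x t)) (xdd t) (xd t) (alpha / t) i _ (h2 tt0)).
  by rewrite divr_gt0 // (lt_trans t00).
have part2 : forall s t, t0 <= s -> s <= t -> W t <= W s.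
  apply: (@W_mono _ _ _ hip (f i) (grad i) x xd t0 _ (hgrad i) (hgc i) hx hx0 hxdc hAC part1).
  move=> t tt0 /= hQ.
  have /(_ tt0) [d1 d2] : t0 < t -> derivable W t 1 /\ derive1 W t <= - (alpha / t) * `|xd t| ^+ 2.
    by apply: contrapT.
  split => //; apply: le_trans d2 _.
  rewrite mulNr oppr_le0 mulr_ge0 // ?exprn_ge0 // divr_ge0 // ?ltW // (lt_trans t00) //.
split => //; split => //.
pose Wb := fun r => (W (Num.max r t0))%:E.
have Wbn : {homo Wb : n m / (n <= m)%O >-> (m <= n)%O}.
  move=> n1 n2 n12; rewrite /Wb lee_fin; apply: part2; first by rewrite le_max lexx orbT.
  by rewrite ge_max !le_max n12 lexx orbT.
exists (ereal_inf (range Wb)); split; [|split].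
- rewrite lt_eqF // (@le_lt_trans _ _ (Wb t0)) ?ltry //.
  by apply: ereal_inf_lbound; exists t0.
- apply: (cvg_trans _ (nonincreasing_cvge Wbn)).
  apply: near_eq_cvg; exists t0; split; first exact: num_real.
  by move=> r /ltW hr; rewrite /Wb max_l.
- move=> [M hM].
  have hl : (M%:E <= ereal_inf (range Wb))%E.
    apply: le_ereal_inf_tmp => _ [r _ <-]; rewrite /Wb lee_fin /W.
    rewrite -[M]addr0; apply: lerD => //; rewrite mulr_ge0 // ?exprn_ge0 //.
  have hu : (ereal_inf (range Wb) <= Wb t0)%E by apply: ereal_inf_lbound; exists t0.
  move: hl hu; rewrite /Wb; case: (ereal_inf _) => //.
Qed.
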